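(* (CRB for perfect prior perception estimator.) Let $\theta$ be a scalar parameter, $X$ a source signal, $Y$ a measurement and $\hat{X}=\mathcal{F}(Y)$ an estimate of $X$ computed from $Y$, with $\theta-X-Y-\hat{X}$ a Markov chain. Suppose $Y$ is a sufficient measurement of $X$ and $\hat{X}$ is a perfect (prior) perception estimator of $X$, i.e. $p_{\hat{X}}(x)=p_X(x)$. Then the Cramér–Rao bounds for $\hat{\theta}_{\hat{X}}$ and $\hat{\theta}_Y$ are not necessarily the same; that is, these hypotheses do not guarantee $\Delta_Y=\Delta_{\hat{X}}$.
   Context: Fisher information of a random variable $V$ with density $p_\theta(v)$: $J_V(\theta)=E\big[(\partial_\theta\log p_\theta(V))^2\mid\theta\big]$, and $\Delta_V=J_V(\theta)^{-1}$ is the Cramér–Rao lower bound on the mean squared error of unbiased estimators of $\theta$ from $V$. A statistic $T(V)$ (deterministic function) is sufficient for $\theta$ if $\theta-T(V)-V$ is a Markov chain. $Y$ is called a sufficient measurement of $X$ if both $X$ and $Y$ have a sufficient statistic for $\theta$. *)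

(* Defs.v *)
From HB Require Import structures.
From mathcomp Require Import all_boot all_order all_algebra.
From mathcomp Require Import all_classical all_reals all_analysis.
Set Implicit Arguments. Unset Strict Implicit. Unset Printing Implicit Defensive.
Import Order.TTheory GRing.Theory Num.Theory.
Import numFieldNormedType.Exports.
Local Open Scope ring_scope.

Section Defs.
Variable R : realType.

Definition is_pmf_family (T : finType) (p : R -> T -> R) : Prop :=
  forall th, (forall t, 0 <= p th t) /\ \sum_(t : T) p th t = 1.

Definition regular_family (T : finType) (p : R -> T -> R) : Prop :=
  forall th t, derivable (fun s => p s t) th 1.

Definition fisher (T : finType) (p : R -> T -> R) (th : R) : R :=
  \sum_(t : T) p th t * (derive1 (fun s => ln (p s t)) th) ^+ 2.

Definition crb (T : finType) (p : R -> T -> R) (th : R) : R :=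
  (fisher p th)^-1.

Definition stat_law (T S : finType) (p : R -> T -> R) (f : T -> S) : R -> S -> R :=
  fun th s => \sum_(t : T | f t == s) p th t.

(* f(V) is a sufficient statistic for theta: theta - f(V) - V is a Markov
   chain, i.e. p(v | f(V) = f(v), theta) does not depend on theta
   (written without division). *)
Definition sufficient_stat (T S : finType) (p : R -> T -> R) (f : T -> S) : Prop :=
  forall th th' v,
    p th v * stat_law p f th' (f v) = p th' v * stat_law p f th (f v).

Definition has_sufficient_stat (T : finType) (p : R -> T -> R) : Prop :=
  exists (S : finType) (f : T -> S), sufficient_stat p f.

Definition marg1 (TX TY : finType) (pXY : R -> TX -> TY -> R) : R -> TX -> R :=
  fun th x => \sum_(y : TY) pXY th x y.
Definition marg2 (TX TY : finType) (pXY : R -> TX -> TY -> R) : R -> TY -> R :=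
  fun th y => \sum_(x : TX) pXY th x y.

(* theta - X - Y is a Markov chain: p(y | x, theta) does not depend on theta. *)
Definition markov_param (TX TY : finType) (pXY : R -> TX -> TY -> R) : Prop :=
  forall th th' x y,
    pXY th x y * marg1 pXY th' x = pXY th' x y * marg1 pXY th x.

End Defs.

(* Main.v *)
Require Import Defs.
From HB Require Import structures.
From mathcomp Require Import all_boot all_order all_algebra.
From mathcomp Require Import all_classical all_reals all_analysis.
Import Order.TTheory GRing.Theory Num.Theory.
Import numFieldNormedType.Exports.
Local Open Scope ring_scope.

Section S.
Context {R : realType}.
Definition g (th : R) : R := expR (- (th ^+ 2)).
Definition q (b : bool) (th : R) : R := if b then g th else 1 - g th.
Definition pxy (th : R) (x y : bool) : R := (y == x)%:R * q x th.

Lemma g_ge0 th : 0 <= g th. Proof. exact: expR_ge0. Qed.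
Lemma g_le1 th : g th <= 1.
Proof. rewrite /g -expR0 ler_expR lerNl oppr0; exact: sqr_ge0. Qed.
Lemma q_ge0 b th : 0 <= q b th.
Proof. case: b => /=; [exact: g_ge0 | rewrite subr_ge0; exact: g_le1]. Qed.

Lemma id_suff (T : finType) (p : R -> T -> R) : sufficient_stat p id.
Proof.
move=> th th' v; rewrite /stat_law /= !big_pred1_eq.
by rewrite mulrC.
Qed.

Lemma marg1E th x : marg1 pxy th x = q x th.
Proof.
rewrite /marg1 /pxy (bigD1 x) //= eqxx mul1r big1 ?addr0 // => y /negbTE ->.
by rewrite mul0r.
Qed.

Lemma marg2E th y : marg2 pxy th y = q y th.
Proof.
rewrite /marg2 /pxy (bigD1 y) //= eqxx mul1r big1 ?addr0 // => x.
by rewrite eq_sym => /negbTE ->; rewrite mul0r.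
Qed.
End S.
Arguments g {R}. Arguments q {R}. Arguments pxy {R}.

Section S2.
Context {R : realType}.
Lemma hd (x:R) : is_derive x 1 (fun th : R => - th ^+ 2) (- (2%:R * x)).
Proof.
apply: is_deriveN.
have := is_deriveX 2 (is_derive_id x (1:R)).
by rewrite expr1 scaler1.
Qed.

Lemma is_derive_g (x : R) : is_derive x 1 (@g R) (expR (- x ^+ 2) * (- (2%:R * x))).
Proof.
rewrite /g.
have -> : (fun th : R => expR (- th ^+ 2)) = expR \o (fun th => - th ^+ 2) by [].
have h := hd x.
have := (@is_derive1_comp R expR (fun th => - th ^+ 2) x _ _ (is_derive_expR (- x ^+ 2)) h).
by move=> h'; exact: h'.
Qed.

Lemma derivable_g (x : R) : derivable (@g R) x 1.
Proof. by have [] := is_derive_g x. Qed.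

Lemma meas_g : measurable_fun setT (@g R).
Proof.
apply: measurableT_comp; first exact: measurable_realfun.measurable_expR.
apply: measurable_realfun.measurable_funN; exact: measurable_realfun.measurable_funX.
Qed.

Lemma g0 : @g R 0 = 1.
Proof. by rewrite /g expr0n /= oppr0 expR0. Qed.

Lemma dlng : derive1 (fun s : R => ln (g s)) 1 = - 2%:R.
Proof.
have -> : (fun s : R => ln (g s)) = (fun s => - s ^+ 2).
  by apply: funext => s; rewrite /g expRK.
rewrite derive1E.
by rewrite (@derive_val _ _ _ _ _ _ _ (hd 1)) mulr1.
Qed.
End S2.

Theorem proposition12 (R : realType) :
  exists (TX TY : finType) (pXY : R -> TX -> TY -> R) (F : TY -> TX)
         (prior : probability R R),
    [/\ is_pmf_family (fun th (xy : TX * TY) => pXY th xy.1 xy.2)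
         /\ regular_family (fun th (xy : TX * TY) => pXY th xy.1 xy.2),
        markov_param pXY,
        has_sufficient_stat (marg1 pXY) /\ has_sufficient_stat (marg2 pXY),
        (forall x : TX,
           (\int[prior]_th ((marg1 pXY th x)%:E) =
            \int[prior]_th ((stat_law (marg2 pXY) F th x)%:E))%E)
      & exists th : R,
          crb (marg2 pXY) th != crb (stat_law (marg2 pXY) F) th].
Proof.
have statE : stat_law (marg2 (@pxy R)) (fun _ : bool => true) = fun th s => (s == true)%:R.
  apply: funext => th; apply: funext => s; rewrite /stat_law.
  case: s => /=.
    by rewrite big_bool /= !marg2E /q /= addrC subrK.
  by rewrite big_pred0.
exists bool, bool, (@pxy R), (fun _ => true), (\d_(0:R)).
split.
- split.
  + move=> th; split.
      by move=> [x y] /=; rewrite /pxy mulr_ge0 ?ler0n ?q_ge0.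
    rewrite -(pair_bigA _ (fun x y => pxy th x y)) /=.
    rewrite (eq_bigr (fun x => q x th)); last by move=> x _; rewrite -(marg1E th x).
    by rewrite big_bool /q /= addrC subrK.
  + move=> th [x y] /=; rewrite /pxy.
    apply: derivableM; first exact: derivable_cst.
    case: x => /=; first exact: derivable_g.
    apply: derivableB; first exact: derivable_cst.
    exact: derivable_g.
- move=> th th' x y; rewrite !marg1E /pxy.
  by rewrite -!mulrA [q x th * _]mulrC.
- by split; exists bool, id; apply: id_suff.
- move=> x; rewrite statE.
  have P1 : (\d_(0%R:R) (@setT R) = 1 :> \bar R)%E.
    by rewrite diracE in_setT.
  rewrite integral_cst // [X in (_ * X)%E](_ : _ = 1%E); last exact: P1.
  rewrite mule1.
  rewrite integral_dirac //; last first.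
    apply/measurable_realfun.measurable_EFinP.
    rewrite (_ : (fun th => marg1 pxy th x) = q x); last by apply: funext => th; rewrite marg1E.
    case: x => /=.
      exact: meas_g.
    apply: measurable_realfun.measurable_funB => //; exact: meas_g.
  rewrite [X in (X * _)%E](_ : _ = 1%E); last exact: P1.
  rewrite mul1e marg1E /q g0.
  by case: x => //=; rewrite subrr.
- exists 1; rewrite statE /crb.
  have -> : fisher (fun th s => (s == true)%:R : R) 1 = 0.
    rewrite /fisher big1 // => s _.
    rewrite (_ : (fun s0 => ln ((s == true)%:R : R)) = cst (ln ((s == true)%:R))) //.
    by rewrite derive1_cst expr0n /= mulr0.
  rewrite invr0 invr_eq0 /fisher big_bool /=.
  rewrite (_ : (fun s => ln (marg2 pxy s true)) = fun s => ln (g s)); last first.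
    by apply: funext => s; rewrite marg2E.
  rewrite dlng marg2E /=.
  have h1 : 0 < g (1:R) by rewrite /g expR_gt0.
  have h2 : 0 <= marg2 pxy 1 false * (derive1 (fun s => ln (marg2 pxy s false)) (1:R)) ^+ 2.
    by rewrite mulr_ge0 ?sqr_ge0 // marg2E q_ge0.
  apply: lt0r_neq0.
  apply: ltr_wpDr => //.
  by rewrite mulr_gt0 // sqrrN exprn_gt0.
Qed.
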